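(* The map $\Lambda:\Xi\to\Psi:=\Lambda(\Xi)$ is a bijection, and in terms of $\psi=\Lambda(\Gamma(\theta))$ the log-likelihood of the observed data is $$L(\psi)=\sum_{k=1}^K n_k\log\xi_{S_k}(\psi)+\sum_{i\in E}n_i(1)\,\psi_i ,$$ where $\xi(\psi)=\Lambda^{-1}(\psi)$. Equivalently, in terms of $\xi\in\Xi$, $$L(\xi)=\sum_{i\in E}\Big[n_i(1)\log\frac{1-\xi_i}{1-\prod_{j\in C_i}\xi_j}+n_i(0)\log\xi_i\Big],$$ with the convention that the empty product over $C_i=\emptyset$ equals $0$. Moreover, for non-leaf $i$, $\psi_i=\log P(X_i=1\mid \text{probe at tail of } i,\ X_r=0\ \forall r\in R_i)$.
   Context: Network: a finite set of directed links $E=\{1,\dots,m\}$ between nodes, forming a directed acyclic graph. For a link $i$, $C_i$ is the set of links whose tail is the head of $i$ (child links); $B_i$ is the set of links having the same tail as $i$ (brother links, including $i$ itself); $F_i$ is the set of links whose head is the tail of $i$ (parent links). A link $i$ is a leaf link if $C_i=\emptyset$; $R$ is the set of leaf links, and $R_i$ is the set of leaf links that are descendants of $i$ (including $i$ itself if $i$ is a leaf). The network is covered by $K\ge1$ multicast trees $T_1,\dots,T_K$: $T_k$ has a root link $S_k$ whose tail is a source node with no incoming link ($F_{S_k}=\emptyset$); its link set $E_k$ consists of $S_k$ and all descendants of $S_k$; every link $i\in E_k\setminus\{S_k\}$ has exactly one parent link in $E_k$, denoted $f^{(k)}_i\in F_i\cap E_k$; every link belongs to some $E_k$; each root link $S_k$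 belongs only to $E_k$. Write $\mathscr S=\{S_1,\dots,S_K\}$. Loss model: each link $i$ has loss rate $\theta_i$, $\theta\in\Theta=(0,1)^m$. From the source of tree $T_k$, $n_k$ probes are sent. For probe $t$ in tree $k$ and $i\in E_k$, $X^{(k,t)}_i=1$ if the probe reached the head of link $i$ and $0$ otherwise. A probe at the tail of link $i$ (i.e., $i=S_k$, or $X^{(k,t)}_{f^{(k)}_i}=1$) traverses link $i$ with probability $1-\theta_i$, independently across links, probes and trees; a probe not at the tail of $i$ does not reach its head. Only $X^{(k,t)}_r$ for leaf links $r\in R\cap E_k$ are observed; the log-likelihood is the log-probability of the observed data. Internal views: $Y^{(k,t)}_i=\max_{r\in R_i}X^{(k,t)}_r$ for $i\in E_k$; $n_{k,i}(1)=\sum_{t=1}^{n_k}Y^{(k,t)}_i$ for $i\in E_k$ and $0$ for $i\notin E_k$; $n_{k,S_k}(0)=n_k-n_{k,S_k}(1)$, $n_{k,i}(0)=n_{k,f^{(k)}_i}(1)-n_{k,i}(1)$ for $i\in E_k\setminus\{S_k\}$, and $0$ for $i\notin E_k$; $n_i(1)=\sum_k n_{k,i}(1)$, $n_i(0)=\sum_k n_{k,i}(0)$. Parameter systems: $\xi_i(\theta)=\theta_i$ for leaf $i$ and $\xi_i(\theta)=\theta_i+(1-\theta_i)\prod_{j\in C_i}\xi_j(\theta)$ otherwise (recursively from the leaves); $\Gamma(\theta)=(\xi_i(\theta))_i$, $\Xi=\Gamma(\Theta)$, with inverse $\theta_i(\xi)=\xi_i$ for leaf $i$ and $\theta_i(\xi)=(\xi_i-\prod_{j\in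 C_i}\xi_j)/(1-\prod_{j\in C_i}\xi_j)$ otherwise. For $\xi\in\Xi$ define $\Lambda(\xi)=\psi$ by $\psi_i=\log\frac{1-\theta_i(\xi)}{\xi_i}$ for leaf $i$ and $\psi_i=\log\frac{\xi_i-\theta_i(\xi)}{\xi_i}$ for non-leaf $i$. *)

(* Defs.v *)
From mathcomp Require Import all_boot.
From Stdlib Require Import Reals.
Open Scope R_scope.

Section Network.
Context {V : eqType} {m K : nat}.
Variables (hd tl : 'I_m -> V)       (* head / tail node of each link *)
          (S : 'I_K -> 'I_m)        (* root link of tree k *)
          (f : 'I_K -> 'I_m -> 'I_m). (* parent link f^{(k)}_i in tree k *)

Definition child (i j : 'I_m) : bool := tl j == hd i.
Definition isleaf (i : 'I_m) : bool := [forall j, ~~ child i j].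
Definition desc (i j : 'I_m) : bool := connect child i j.
Definition inTree (k : 'I_K) (j : 'I_m) : bool := desc (S k) j.

Definition trans (theta : 'I_m -> R) (x : {ffun 'I_m -> bool}) (attail : bool)
  (i : 'I_m) : R :=
  if attail then (if x i then 1 - theta i else theta i)
  else (if x i then 0 else 1).

(* probability of the full configuration x of (X_i)_{i in E_k}
   (links outside E_k are set to 0) *)
Definition weight (theta : 'I_m -> R) (k : 'I_K) (x : {ffun 'I_m -> bool}) : R :=
  \big[Rmult/1]_(i : 'I_m)
     (if inTree k i then trans theta x ((i == S k) || x (f k i)) i
      else if x i then 0 else 1).

Definition prob (theta : 'I_m -> R) (k : 'I_K)
  (A : {ffun 'I_m -> bool} -> bool) : R :=
  \big[Rplus/0]_(x : {ffun 'I_m -> bool} | A x) weight theta k x.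

(* log-likelihood of the observed leaf data: obs k t r = X^{(k,t)}_r,
   only used for leaves r in E_k and t < n k *)
Definition loglik (theta : 'I_m -> R) (n : 'I_K -> nat)
  (obs : 'I_K -> nat -> 'I_m -> bool) : R :=
  ln (\big[Rmult/1]_(k : 'I_K) \big[Rmult/1]_(t < n k)
        prob theta k (fun x => [forall r, (isleaf r && inTree k r) ==> (x r == obs k t r)])).

Definition Y (obs : 'I_K -> nat -> 'I_m -> bool) (k : 'I_K) (t : nat) (i : 'I_m) : bool :=
  [exists r, [&& isleaf r, desc i r & obs k t r]].

Definition n1k (n : 'I_K -> nat) obs (k : 'I_K) (i : 'I_m) : R :=
  if inTree k i then INR #|[pred t : 'I_(n k) | Y obs k t i]| else 0.

Definition n0k (n : 'I_K -> nat) obs (k : 'I_K) (i : 'I_m) : R :=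
  if inTree k i then
    (if i == S k then INR (n k) - n1k n obs k i
     else n1k n obs k (f k i) - n1k n obs k i)
  else 0.

Definition n1 n obs (i : 'I_m) : R := \big[Rplus/0]_(k : 'I_K) n1k n obs k i.
Definition n0 n obs (i : 'I_m) : R := \big[Rplus/0]_(k : 'I_K) n0k n obs k i.

Definition prodC (xi : 'I_m -> R) (i : 'I_m) : R :=
  \big[Rmult/1]_(j : 'I_m | child i j) xi j.

Definition gstep (theta : 'I_m -> R) (xi : 'I_m -> R) (i : 'I_m) : R :=
  if isleaf i then theta i else theta i + (1 - theta i) * prodC xi i.

(* Gamma(theta): on a DAG with m links, m iterations of the recursion
   starting anywhere give its unique solution (computed from the leaves up) *)
Definition Gamma (theta : 'I_m -> R) : 'I_m -> R := iter m (gstep theta) (fun _ => 0).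

Definition inTheta (theta : 'I_m -> R) : Prop := forall i, 0 < theta i < 1.
Definition inXi (xi : 'I_m -> R) : Prop :=
  exists theta, inTheta theta /\ forall i, xi i = Gamma theta i.

Definition thetaOf (xi : 'I_m -> R) (i : 'I_m) : R :=
  if isleaf i then xi i else (xi i - prodC xi i) / (1 - prodC xi i).

Definition Lambda (xi : 'I_m -> R) (i : 'I_m) : R :=
  if isleaf i then ln ((1 - thetaOf xi i) / xi i)
  else ln ((xi i - thetaOf xi i) / xi i).

Definition prod0 (xi : 'I_m -> R) (i : 'I_m) : R :=
  if isleaf i then 0 else prodC xi i.

End Network.

(* Main.v *)
From HB Require Import structures.
Require Import Defs.
From mathcomp Require Import all_boot.
From Stdlib Require Import Reals Lra FunctionalExtensionality.
Open Scope R_scope.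
Set Implicit Arguments. Unset Strict Implicit.
Set Warnings "-redundant-canonical-projection -notation-overridden".

HB.instance Definition _ := Monoid.isComLaw.Build R 0 Rplus (fun a b c => esym (Rplus_assoc a b c)) Rplus_comm Rplus_0_l.
HB.instance Definition _ := Monoid.isComLaw.Build R 1 Rmult (fun a b c => esym (Rmult_assoc a b c)) Rmult_comm Rmult_1_l.
HB.instance Definition _ := Monoid.isMulLaw.Build R 0 Rmult Rmult_0_l Rmult_0_r.
HB.instance Definition _ := Monoid.isAddLaw.Build R Rmult Rplus Rmult_plus_distr_r Rmult_plus_distr_l.

Lemma iter_plus n c : iter n (Rplus c) 0 = INR n * c.
Proof. elim: n => [|n IH]; first by rewrite /=; ring. rewrite iterS IH S_INR; ring. Qed.

Lemma sum_count (I : finType) (P : pred I) c :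
  \big[Rplus/0]_(t : I) (if P t then c else 0) = INR #|P| * c.
Proof. by rewrite -big_mkcond big_const iter_plus. Qed.

Lemma sum_const_R (I : finType) c : \big[Rplus/0]_(t : I) c = INR #|I| * c.
Proof. by rewrite big_const iter_plus. Qed.

Lemma ln_prodG (I : finType) (P : pred I) (F : I -> R) : (forall j, P j -> 0 < F j) ->
  ln (\big[Rmult/1]_(j | P j) F j) = \big[Rplus/0]_(j | P j) ln (F j).
Proof.
move=> H.
suff: 0 < \big[Rmult/1]_(j | P j) F j /\ ln (\big[Rmult/1]_(j | P j) F j) = \big[Rplus/0]_(j | P j) ln (F j) by case.
apply: (big_rec2 (fun a b => 0 < a /\ ln a = b)); first by rewrite ln_1; split; lra.
move=> j a b hj [ha hb]; split; first by apply: Rmult_lt_0_compat; auto.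
by rewrite ln_mult ?hb; auto.
Qed.

Lemma prod_posG (I : finType) (P : pred I) (F : I -> R) : (forall j, P j -> 0 < F j) -> 0 < \big[Rmult/1]_(j | P j) F j.
Proof. move=> H; apply: big_ind => //; [lra | move=> a b ha hb; nra]. Qed.

Lemma exchG (I J : finType) (F : I -> J -> R) :
  \big[Rplus/0]_(i : I) \big[Rplus/0]_(j : J) F i j = \big[Rplus/0]_(j : J) \big[Rplus/0]_(i : I) F i j.
Proof. exact: exchange_big. Qed.

Lemma splitG (I : finType) (P : pred I) (F G : I -> R) :
  \big[Rplus/0]_(i | P i) (F i + G i) = \big[Rplus/0]_(i | P i) F i + \big[Rplus/0]_(i | P i) G i.
Proof. exact: big_split. Qed.

Lemma distrlG (I : finType) (P : pred I) (F : I -> R) a :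
  \big[Rplus/0]_(i | P i) F i * a = \big[Rplus/0]_(i | P i) (F i * a).
Proof. exact: big_distrl. Qed.

Lemma distrrG (I : finType) (P : pred I) (F : I -> R) a :
  a * \big[Rplus/0]_(i | P i) F i = \big[Rplus/0]_(i | P i) (a * F i).
Proof. exact: big_distrr. Qed.

Lemma mkcondG (I : finType) (P : pred I) (F : I -> R) :
  \big[Rplus/0]_(i | P i) F i = \big[Rplus/0]_(i : I) (if P i then F i else 0).
Proof. exact: big_mkcond. Qed.

Lemma oppG (I : finType) (F : I -> R) :
  \big[Rplus/0]_(i : I) (- F i) = - \big[Rplus/0]_(i : I) F i.
Proof.
apply: (big_rec2 (fun a b => a = - b)); first by rewrite Ropp_0.
by move=> i a b _ ->; ring.
Qed.

Section Graph.
Open Scope nat_scope.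
Variables (V : eqType) (m K : nat) (hd tl : 'I_m -> V) (S : 'I_K -> 'I_m) (f : 'I_K -> 'I_m -> 'I_m).
Local Notation ch := (child hd tl).
Local Notation dsc := (desc hd tl).
Local Notation tree := (inTree hd tl S).
Local Notation leaf := (isleaf hd tl).
Hypothesis Hacyc : forall i j, ch i j -> ~~ dsc j i.

Definition Dset i := [set l | dsc i l].

Lemma dsc_refl i : dsc i i. Proof. exact: connect0. Qed.
Lemma dsc_trans i j l : dsc i j -> dsc j l -> dsc i l. Proof. exact: connect_trans. Qed.
Lemma dsc_ch i j : ch i j -> dsc i j. Proof. exact: connect1. Qed.

Lemma card_D_lt i j : ch i j -> #|Dset j| < #|Dset i|.
Proof.
move=> hij; apply: proper_card; apply/properP; split.
  apply/subsetP=> l; rewrite !inE; apply: dsc_trans; exact: dsc_ch.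
exists i; first by rewrite inE dsc_refl.
by rewrite inE; apply: Hacyc.
Qed.

Lemma dag_ind (P : 'I_m -> Prop) :
  (forall i, (forall j, ch i j -> P j) -> P i) -> forall i, P i.
Proof.
move=> H i.
suff: forall n i, (#|Dset i| < n)%N -> P i by apply; exact: ltnSn.
elim=> [//|n IH] {}i hi; apply: H => j hj; apply: IH.
by have := card_D_lt hj; rewrite ltnS in hi; move/leq_trans; apply.
Qed.

Lemma card_D_pos i : (0 < #|Dset i|)%N.
Proof. by apply/card_gt0P; exists i; rewrite inE dsc_refl. Qed.
Lemma card_D_le i : (#|Dset i| <= m)%N.
Proof. by have := max_card (mem (Dset i)); rewrite card_ord. Qed.

Lemma iter_fix (T : Type) (F : ('I_m -> T) -> 'I_m -> T) (z : 'I_m -> T) :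
  (forall g1 g2 i, (forall j, ch i j -> g1 j = g2 j) -> F g1 i = F g2 i) ->
  forall i, iter m F z i = F (iter m F z) i.
Proof.
move=> Hloc.
have key : forall i n, (#|Dset i| <= n)%N -> iter n F z i = iter #|Dset i| F z i.
  apply: (@dag_ind (fun i => forall n, (#|Dset i| <= n)%N -> iter n F z i = iter #|Dset i| F z i)) => i IH n hn.
  have hp := card_D_pos i.
  case: n hn => [|n] hn; first by rewrite leqn0 in hn; rewrite (eqP hn) in hp.
  case E: #|Dset i| hp => [//|d] _.
  rewrite /= ; apply: Hloc => j hj.
  have hj' := card_D_lt hj; rewrite E ltnS in hj'.
  rewrite IH //; last by apply: leq_trans hj' _; rewrite -ltnS -E.
  by rewrite IH.
move=> i; rewrite -iterS key ?card_D_le // key //.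
by apply: leq_trans (card_D_le i) _.
Qed.

Lemma dsc_split i l : dsc i l -> l = i \/ exists2 c, ch i c & dsc c l.
Proof.
case/connectP=> [[|c p]] /= => [_ ->|/andP[hc hp] ->]; first by left.
by right; exists c => //; apply/connectP; exists p.
Qed.

Lemma dsc_last a l : dsc a l -> l != a -> exists2 q, dsc a q & ch q l.
Proof.
case/connectP=> p; elim/last_ind: p => [/= _ -> /eqP//|p q _].
rewrite rcons_path last_rcons => /andP[hp hq] -> _.
by exists (last a p) => //; apply/connectP; exists p.
Qed.

Lemma leaf_dsc i l : leaf i -> dsc i l -> l = i.
Proof.
move=> /forallP hl /dsc_split [//|[c hc _]].
by have := hl c; rewrite hc.
Qed.

Lemma leafP i : ~~ leaf i -> exists c, ch i c.
Proof. by move/forallPn=> [c]; rewrite negbK; exists c. Qed.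

Lemma tree_dsc k i j : tree k i -> dsc i j -> tree k j.
Proof. exact: dsc_trans. Qed.
Lemma tree_ch k i j : tree k i -> ch i j -> tree k j.
Proof. by move=> h /dsc_ch; apply: tree_dsc. Qed.

Hypothesis HS : forall k j, ~~ ch j (S k).
Hypothesis Hf : forall k i, tree k i -> i != S k -> ch (f k i) i && tree k (f k i).
Hypothesis Hfu : forall k i j, tree k i -> i != S k -> ch j i -> tree k j -> j = f k i.

Lemma tree_path k a l : tree k a -> dsc a l -> l != a -> (l != S k) && dsc a (f k l).
Proof.
move=> ha hal hla; case: (dsc_last hal hla) => q hq hql.
have tq := tree_dsc ha hq; have tl' := tree_ch tq hql.
have hlS : l != S k by apply/eqP=> E; have := HS k q; rewrite -E hql.
by rewrite hlS /= -(Hfu tl' hlS hql tq).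
Qed.

Lemma dsc_linear k l a1 a2 : tree k a1 -> tree k a2 -> dsc a1 l -> dsc a2 l ->
  dsc a1 a2 || dsc a2 a1.
Proof.
pose A l := [set a | dsc a l].
suff: forall n l, (#|A l| < n)%N -> forall a1 a2, tree k a1 -> tree k a2 ->
  dsc a1 l -> dsc a2 l -> dsc a1 a2 || dsc a2 a1 by apply; exact: ltnSn.
elim=> [//|n IH] {}l hn {}a1 {}a2 t1 t2 h1 h2.
have [E1|n1] := eqVneq l a1; first by rewrite -E1 h2 orbT.
have [E2|n2] := eqVneq l a2; first by rewrite -E2 h1.
case/andP: (tree_path t1 h1 n1) => hlS h1'.
case/andP: (tree_path t2 h2 n2) => _ h2'.
apply: (IH (f k l)) => //.
case/andP: (Hf (tree_dsc t1 h1) hlS) => hfl _.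
have lt : (#|A (f k l)| < #|A l|)%N.
  apply: proper_card; apply/properP; split.
    by apply/subsetP=> x; rewrite !inE => hx; apply: dsc_trans hx (dsc_ch hfl).
  by exists l; rewrite !inE ?dsc_refl //; apply: Hacyc.
by rewrite ltnS in hn; apply: leq_trans lt hn.
Qed.

Lemma ch_disj k i c1 c2 l : tree k i -> ch i c1 -> ch i c2 -> dsc c1 l -> dsc c2 l -> c1 = c2.
Proof.
move=> ti h1 h2 d1 d2.
have t1 := tree_ch ti h1; have t2 := tree_ch ti h2.
suff H : forall c1 c2, ch i c1 -> ch i c2 -> tree k c1 -> tree k c2 -> dsc c1 c2 -> c1 = c2.
  by case/orP: (dsc_linear t1 t2 d1 d2) => h; [apply: H | apply/esym/H].
clear h1 h2 d1 d2 t1 t2 => c1' c2' h1 h2 t1 t2 d.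
have [//|n] := eqVneq c2' c1'.
case/andP: (tree_path t1 d n) => hS hdd.
have E := Hfu t2 hS h2 ti; rewrite -E in hdd.
by have := Hacyc h1; rewrite hdd.
Qed.

Definition chs i := [seq c <- enum 'I_m | ch i c].
Lemma chs_uniq i : uniq (chs i). Proof. by rewrite filter_uniq ?enum_uniq. Qed.
Lemma mem_chs i c : (c \in chs i) = ch i c. Proof. by rewrite mem_filter mem_enum andbT. Qed.

Lemma mem_bigcup_seq (D : 'I_m -> {set 'I_m}) (s : seq 'I_m) l :
  (l \in \bigcup_(c <- s) D c) = has (fun c => l \in D c) s.
Proof. by elim: s => [|c s IH]; rewrite ?big_nil ?big_cons ?inE //= IH. Qed.

Lemma disjP (A B : {set 'I_m}) : (forall l, l \in A -> l \in B -> False) -> [disjoint A & B].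
Proof. move=> H; apply/pred0P => l /=; apply/negbTE/negP => /andP[a b]; exact: H a b. Qed.

Lemma D_decomp i : Dset i = i |: \bigcup_(c <- chs i) Dset c.
Proof.
apply/setP => l; rewrite !inE mem_bigcup_seq; apply/idP/idP.
  case/dsc_split => [->|[c hc hl]]; first by rewrite eqxx.
  by apply/orP; right; apply/hasP; exists c; rewrite ?mem_chs // inE.
case/orP=> [/eqP->|/hasP[c]]; first exact: dsc_refl.
by rewrite mem_chs inE => hc hl; apply: dsc_trans (dsc_ch hc) hl.
Qed.

Lemma i_notin i : i \notin \bigcup_(c <- chs i) Dset c.
Proof.
rewrite mem_bigcup_seq; apply/hasP => [[c]]; rewrite mem_chs inE => hc hl.
by have := Hacyc hc; rewrite hl.
Qed.

Lemma chs_disj k i : tree k i -> forall c1 c2, c1 \in chs i -> c2 \in chs i -> c1 != c2 ->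
  [disjoint Dset c1 & Dset c2].
Proof.
move=> ti c1 c2; rewrite !mem_chs => h1 h2 n; apply/disjP => l; rewrite !inE => d1 d2.
by have := ch_disj ti h1 h2 d1 d2; move/eqP; rewrite (negbTE n).
Qed.

Section BigGen.
Variables (T : Type) (idx : T) (op : Monoid.com_law idx).

Lemma big_chs i (F : 'I_m -> T) :
  \big[op/idx]_(c <- chs i) F c = \big[op/idx]_(c | ch i c) F c.
Proof. by rewrite big_filter big_enum_cond. Qed.

Lemma big_disjU (A B : {set 'I_m}) (F : 'I_m -> T) : [disjoint A & B] ->
  \big[op/idx]_(l in A :|: B) F l = op (\big[op/idx]_(l in A) F l) (\big[op/idx]_(l in B) F l).
Proof.
move=> dAB; rewrite (bigID (fun l => l \in A)) /=; congr (op _ _); apply: eq_bigl => l; rewrite !inE.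
  by case: (l \in A); case: (l \in B).
case hA: (l \in A); case hB: (l \in B) => //=.
by rewrite (disjointFr dAB hA) in hB.
Qed.

Lemma big_bigcup (D : 'I_m -> {set 'I_m}) (s : seq 'I_m) (F : 'I_m -> T) :
  uniq s -> (forall c1 c2, c1 \in s -> c2 \in s -> c1 != c2 -> [disjoint D c1 & D c2]) ->
  \big[op/idx]_(l in \bigcup_(c <- s) D c) F l = \big[op/idx]_(c <- s) \big[op/idx]_(l in D c) F l.
Proof.
elim: s => [|c s IH] /= => [_ _|/andP[cs us] hdj].
  by rewrite !big_nil; apply: big_pred0 => l; rewrite inE.
rewrite !big_cons big_disjU; first rewrite IH //.
  by move=> c1 c2 h1 h2; apply: hdj; rewrite inE ?h1 ?h2 orbT.
apply/disjP => l hl; rewrite mem_bigcup_seq => /hasP [c' hc' hl'].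
have: [disjoint D c & D c'] by apply: hdj; rewrite ?inE ?eqxx ?hc' ?orbT //; apply/eqP=> E; rewrite E hc' in cs.
by move/disjointFr/(_ hl); rewrite hl'.
Qed.
Lemma big_D k i (F : 'I_m -> T) : tree k i ->
  \big[op/idx]_(l in Dset i) F l = op (F i) (\big[op/idx]_(c | ch i c) \big[op/idx]_(l in Dset c) F l).
Proof.
move=> ti; rewrite {1}D_decomp big_setU1 ?i_notin //= big_bigcup ?chs_uniq ?big_chs //.
exact: chs_disj ti.
Qed.
End BigGen.

Open Scope R_scope.
Lemma ln_div' x y : 0 < x -> 0 < y -> ln (x / y) = ln x - ln y.
Proof.
move=> hx hy; rewrite /Rdiv ln_mult; [rewrite ln_Rinv //; ring | exact: hx | exact: Rinv_0_lt_compat].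
Qed.

Lemma ln_prod (P : pred 'I_m) (F : 'I_m -> R) : (forall j, P j -> 0 < F j) ->
  ln (\big[Rmult/1]_(j | P j) F j) = \big[Rplus/0]_(j | P j) ln (F j).
Proof.
move=> H.
suff: 0 < \big[Rmult/1]_(j | P j) F j /\ ln (\big[Rmult/1]_(j | P j) F j) = \big[Rplus/0]_(j | P j) ln (F j) by case.
apply: (big_rec2 (fun a b => 0 < a /\ ln a = b)); first by rewrite ln_1; split; lra.
move=> j a b hj [ha hb]; split; first by apply: Rmult_lt_0_compat; auto.
by rewrite ln_mult ?hb; auto.
Qed.

Local Notation Gam := (Gamma hd tl).
Local Notation pC := (prodC hd tl).

Lemma Gamma_fix th i : Gam th i = if leaf i then th i else th i + (1 - th i) * pC (Gam th) i.
Proof.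
rewrite /Gamma iter_fix //= => g1 g2 j H; rewrite /gstep /prodC.
by rewrite (eq_bigr _ (fun c hc => H c hc)).
Qed.

Lemma prodC_bounds g i : (forall j, 0 < g j < 1) -> 0 < pC g i <= 1.
Proof.
move=> H; apply: (big_ind (fun x => 0 < x <= 1)); first lra.
  by move=> a b ha hb; split; nra.
by move=> j _; have := H j; lra.
Qed.

Lemma prodC_lt1 g i : (forall j, 0 < g j < 1) -> ~~ leaf i -> pC g i < 1.
Proof.
move=> H /leafP [c hc]; rewrite /prodC (bigD1 c) //=.
match goal with |- _ * ?B < 1 => have : 0 < B <= 1 end.
  apply: (big_ind (fun x => 0 < x <= 1)); first lra.
    by move=> a b ha hb; split; nra.
  by move=> j _; have := H j; lra.
have := H c; nra.
Qed.

Lemma Gamma_bounds th : inTheta th -> forall i, 0 < Gam th i < 1.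
Proof.
move=> Hth; apply: dag_ind => i IH; rewrite Gamma_fix.
have := Hth i; case: ifP => hl; first lra.
have hB : forall j, 0 < (if ch i j then Gam th j else 1/2) < 1.
  by move=> j; case: ifP => h; [apply: IH| lra].
have E : pC (Gam th) i = pC (fun j => if ch i j then Gam th j else 1/2) i.
  by rewrite /prodC; apply: eq_bigr => j ->.
have := prodC_bounds i hB; have := prodC_lt1 hB (negbT hl); rewrite -E => ? ? ?; nra.
Qed.

Lemma pC_bounds th i : inTheta th -> 0 < pC (Gam th) i <= 1.
Proof. by move=> Hth; apply: prodC_bounds; apply: Gamma_bounds. Qed.
Lemma pC_lt1 th i : inTheta th -> ~~ leaf i -> pC (Gam th) i < 1.
Proof. by move=> Hth; apply: prodC_lt1; apply: Gamma_bounds. Qed.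

Lemma thetaOf_Gamma th i : inTheta th -> thetaOf hd tl (Gam th) i = th i.
Proof.
move=> Hth; rewrite /thetaOf (Gamma_fix th i); case hl: (leaf i) => //=.
have := pC_lt1 Hth (negbT hl); move=> hP.
field; lra.
Qed.

Lemma Lambda_Gamma th i : inTheta th ->
  Lambda hd tl (Gam th) i = ln (1 - th i) + \big[Rplus/0]_(c | ch i c) ln (Gam th c) - ln (Gam th i).
Proof.
move=> Hth; have hb := Gamma_bounds Hth; have ht := Hth i; have hbi := hb i.
rewrite /Lambda thetaOf_Gamma //; case: ifP => hl.
  rewrite big_pred0; last by move=> c; move/forallP: hl => /(_ c) /negbTE.
  rewrite ln_div'; lra.
have hP := pC_bounds i Hth.
have E : Gam th i - th i = (1 - th i) * pC (Gam th) i by rewrite Gamma_fix hl; ring.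
rewrite E ln_div' ?ln_mult; try nra.
by rewrite /prodC ln_prod //; move=> c _; case: (hb c).
Qed.

Lemma inv_gt1 x : 0 < x < 1 -> 0 < / x - 1.
Proof.
move=> hx; have h1 := Rinv_0_lt_compat x (proj1 hx).
have h2 : x * / x = 1 by field; lra.
nra.
Qed.

Lemma inv_minus1_inj x1 x2 c : 0 < x1 -> 0 < x2 -> c <> 0 -> c * (/ x1 - 1) = c * (/ x2 - 1) -> x1 = x2.
Proof.
move=> h1 h2 hc E; apply: Rinv_eq_reg.
have := Rmult_eq_reg_l c _ _ E hc; lra.
Qed.

Lemma part1 th1 th2 : inTheta th1 -> inTheta th2 ->
  (forall i, Lambda hd tl (Gam th1) i = Lambda hd tl (Gam th2) i) -> forall i, Gam th1 i = Gam th2 i.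
Proof.
move=> H1 H2 HL; apply: dag_ind => i IH.
have b1 := Gamma_bounds H1 i; have b2 := Gamma_bounds H2 i.
have := HL i; case hl: (leaf i); rewrite /Lambda /thetaOf hl.
  have key : forall x, 0 < x < 1 -> (1 - x) / x = 1 * (/ x - 1) by move=> x hx; field; lra.
  rewrite !key // => EL.
  have E := ln_inv _ _ (Rmult_lt_0_compat _ _ Rlt_0_1 (inv_gt1 b1)) (Rmult_lt_0_compat _ _ Rlt_0_1 (inv_gt1 b2)) EL.
  by apply: (@inv_minus1_inj _ _ 1) => //; lra.
have EP : pC (Gam th1) i = pC (Gam th2) i by rewrite /prodC; apply: eq_bigr => c /IH.
have hP := pC_bounds i H1; have hP1 := pC_lt1 H1 (negbT hl).
rewrite EP in hP hP1 *; move: hP hP1; set P := pC (Gam th2) i => hP hP1.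
have key : forall x, 0 < x < 1 -> (x - (x - P) / (1 - P)) / x = P / (1 - P) * (/ x - 1).
  by move=> x hx; field; split; lra.
have hc : 0 < P / (1 - P) by apply: Rdiv_lt_0_compat; lra.
rewrite !key // => EL.
have E := ln_inv _ _ (Rmult_lt_0_compat _ _ hc (inv_gt1 b1)) (Rmult_lt_0_compat _ _ hc (inv_gt1 b2)) EL.
by apply: (@inv_minus1_inj _ _ (P / (1 - P))) => //; lra.
Qed.

Local Notation ffT := {ffun 'I_m -> bool}.
Definition supp (x : ffT) (A : {set 'I_m}) := [forall j, (j \notin A) ==> ~~ x j].
Definition dep (F : ffT -> R) (A : {set 'I_m}) := forall x y : ffT, (forall j, j \in A -> x j = y j) -> F x = F y.
Definition restr (A : {set 'I_m}) (x : ffT) : ffT := [ffun j => (j \in A) && x j].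
Definition merge (y z : ffT) : ffT := [ffun j => y j || z j].

Lemma suppP (x : ffT) (A : {set 'I_m}) : reflect (forall j, j \notin A -> x j = false) (supp x A).
Proof.
apply: (iffP forallP) => H j; first by move=> hj; have := H j; rewrite hj /= => /negbTE.
by apply/implyP => /H ->.
Qed.

Lemma sum_split (A B : {set 'I_m}) (F G : ffT -> R) : [disjoint A & B] -> dep F A -> dep G B ->
  \big[Rplus/0]_(x | supp x (A :|: B)) (F x * G x) =
  (\big[Rplus/0]_(x | supp x A) F x) * (\big[Rplus/0]_(x | supp x B) G x).
Proof.
move=> dAB hF hG.
rewrite big_distrlr /= pair_big_dep /=.
rewrite (reindex_onto (fun p : ffT * ffT => merge p.1 p.2) (fun x => (restr A x, restr B x))) /=.
  apply: eq_big => [[y z]|[y z]] /=.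
    apply/idP/idP.
      case/andP=> _ /eqP [Ey Ez]; apply/andP; split; apply/suppP => j hj.
        by rewrite -Ey ffunE (negbTE hj).
      by rewrite -Ez ffunE (negbTE hj).
    case/andP => /suppP sy /suppP sz; apply/andP; split.
      apply/suppP => j; rewrite inE negb_or => /andP[ha hb].
      by rewrite ffunE sy ?sz.
    apply/eqP; congr pair; apply/ffunP => j; rewrite !ffunE.
      case hj: (j \in A) => /=; last by rewrite sy ?hj.
      by rewrite (sz j) ?orbF // (disjointFr dAB hj).
    case hj: (j \in B) => /=; last by rewrite sz ?hj.
    by rewrite (sy j) ?(disjointFl dAB hj).
  case/andP=> _ /eqP [Ey Ez].
  congr Rmult; [apply: hF => j hj | apply: hG => j hj]; rewrite ffunE.
    by rewrite -[z]Ez ffunE (disjointFr dAB hj) orbF.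
  by rewrite -[y]Ey ffunE (disjointFl dAB hj).
move=> x /suppP sx; apply/ffunP => j; rewrite !ffunE.
case hA: (j \in A); case hB: (j \in B); rewrite /= ?orbF ?orbb //.
by rewrite sx // inE hA hB.
Qed.

Definition pt (i : 'I_m) (b : bool) : ffT := [ffun j => (j == i) && b].
Definition zero : ffT := [ffun => false].

Lemma sum_single i (F : ffT -> R) :
  \big[Rplus/0]_(x | supp x [set i]) F x = F (pt i true) + F (pt i false).
Proof.
rewrite (reindex_onto (pt i) (fun x => x i)) /=; last first.
  move=> x /suppP sx; apply/ffunP => j; rewrite !ffunE.
  by case: (eqVneq j i) => [->|n] //=; rewrite sx // inE.
rewrite (eq_bigl (fun _ => true)) ?big_bool // => b.
rewrite ffunE eqxx /= eqxx andbT; apply/suppP => j; rewrite inE ffunE => /negbTE ->.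
by [].
Qed.

Lemma sum_empty (F : ffT -> R) : \big[Rplus/0]_(x | supp x set0) F x = F zero.
Proof.
rewrite (big_pred1 zero) // => x; apply/idP/eqP.
  by move/suppP=> sx; apply/ffunP => j; rewrite ffunE sx // inE.
by move->; apply/suppP => j _; rewrite ffunE.
Qed.

Lemma sum_multi (D : 'I_m -> {set 'I_m}) (s : seq 'I_m) (F : 'I_m -> ffT -> R) :
  uniq s -> (forall c1 c2, c1 \in s -> c2 \in s -> c1 != c2 -> [disjoint D c1 & D c2]) ->
  (forall c, c \in s -> dep (F c) (D c)) ->
  \big[Rplus/0]_(x | supp x (\bigcup_(c <- s) D c)) \big[Rmult/1]_(c <- s) F c x =
  \big[Rmult/1]_(c <- s) \big[Rplus/0]_(x | supp x (D c)) F c x.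
Proof.
elim: s => [|c s IH] /= => [_ _ _|/andP[cs us] hdj hdep].
  by rewrite !big_nil sum_empty big_nil.
rewrite (eq_bigl (fun x => supp x (D c :|: \bigcup_(c <- s) D c))); last by move=> x; rewrite big_cons.
under eq_bigr do rewrite big_cons.
rewrite sum_split; first rewrite IH // ?big_cons //.
- by move=> c1 c2 h1 h2; apply: hdj; rewrite inE ?h1 ?h2 orbT.
- by move=> c' h; apply: hdep; rewrite inE h orbT.
- apply/disjP => l hl; rewrite mem_bigcup_seq => /hasP [c' hc' hl'].
  have: [disjoint D c & D c'] by apply: hdj; rewrite ?inE ?eqxx ?hc' ?orbT //; apply/eqP=> E; rewrite E hc' in cs.
  by move/disjointFr/(_ hl); rewrite hl'.
- by apply: hdep; rewrite inE eqxx.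
- move=> x y H; apply: eq_big_seq => c' hc'; apply: hdep; first by rewrite inE hc' orbT.
  move=> j hj; apply: H; rewrite mem_bigcup_seq; apply/hasP; by exists c'.
Qed.

Section Qsec.
Variables (k : 'I_K) (th : 'I_m -> R) (c : 'I_m -> bool -> bool).

Definition tr i (a b : bool) : R := if a then (if b then 1 - th i else th i) else (if b then 0 else 1).

Definition Qstep (g : 'I_m -> bool -> R) i (a : bool) : R :=
  (if c i true then tr i a true * \big[Rmult/1]_(j | ch i j) g j true else 0) +
  (if c i false then tr i a false * \big[Rmult/1]_(j | ch i j) g j false else 0).
Definition Q := iter m Qstep (fun _ _ => 0).

Lemma Q_fix i a : Q i a = Qstep Q i a.
Proof.
have -> : Q i = Qstep Q i.
  rewrite /Q; apply: iter_fix => g1 g2 j H; apply: functional_extensionality => b.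
  by rewrite /Qstep !(eq_bigr _ (fun l hl => f_equal (fun h => h _) (H l hl))).
by [].
Qed.

Definition phi i a (x : ffT) j := if c j (x j) then tr j (if j == i then a else x (f k j)) (x j) else 0.

Lemma phi_child i a cc (x : ffT) j : tree k i -> ch i cc -> j \in Dset cc ->
  phi i a x j = phi cc (x i) x j.
Proof.
move=> ti hc; rewrite inE => hj; rewrite /phi.
have -> : (j == i) = false by apply/negbTE/eqP => E; have := Hacyc hc; rewrite -E hj.
case: (eqVneq j cc) => [E|] //=; rewrite E.
have tc := tree_ch ti hc.
have hS : cc != S k by apply/eqP => E'; have := HS k i; rewrite -E' hc.
by rewrite -(Hfu tc hS hc ti).
Qed.

Lemma phi_dep cc b : tree k cc -> dep (fun x => \big[Rmult/1]_(j in Dset cc) phi cc b x j) (Dset cc).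
Proof.
move=> tc x y H; apply: eq_bigr => j hj; rewrite /phi H //.
case: (eqVneq j cc) => [->|n] //=.
rewrite H //.
move: hj; rewrite !inE => hj; by case/andP: (tree_path tc hj n).
Qed.

Lemma HQ i : tree k i -> forall a,
  \big[Rplus/0]_(x | supp x (Dset i)) \big[Rmult/1]_(j in Dset i) phi i a x j = Q i a.
Proof.
move: i; apply: dag_ind => i IH ti a.
have E1 : forall x : ffT, \big[Rmult/1]_(j in Dset i) phi i a x j =
   \big[Rplus/0]_(b : bool) ((if x i == b then (if c i (x i) then tr i a (x i) else 0) else 0) *
      \big[Rmult/1]_(cc <- chs i) \big[Rmult/1]_(j in Dset cc) phi cc b x j).
  move=> x; rewrite (big_D _ _ ti) big_bool -big_chs.
  have E : forall b, x i = b -> \big[Rmult/1]_(cc <- chs i) \big[Rmult/1]_(j in Dset cc) phi i a x j =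
      \big[Rmult/1]_(cc <- chs i) \big[Rmult/1]_(j in Dset cc) phi cc b x j.
    move=> b hb; apply: eq_big_seq => cc; rewrite mem_chs => hc; apply: eq_bigr => j hj.
    by rewrite (phi_child _ _ ti hc hj) hb.
  have -> : phi i a x i = if c i (x i) then tr i a (x i) else 0 by rewrite /phi eqxx.
  case hx: (x i); rewrite (E _ hx) /=; ring.
rewrite (eq_bigr _ (fun x _ => E1 x)) exchange_big big_bool /=.
rewrite Q_fix /Qstep.
have E2 : forall b, \big[Rplus/0]_(x | supp x (Dset i))
     ((if x i == b then (if c i (x i) then tr i a (x i) else 0) else 0) *
      \big[Rmult/1]_(cc <- chs i) \big[Rmult/1]_(j in Dset cc) phi cc b x j) =
    (if c i b then tr i a b * \big[Rmult/1]_(j | ch i j) Q j b else 0).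
  move=> b; rewrite {1}D_decomp sum_split; first last.
  - move=> x y H; apply: eq_big_seq => cc; rewrite mem_chs => hc; apply: phi_dep; first exact: tree_ch ti hc.
    move=> j hj; apply: H; rewrite mem_bigcup_seq; apply/hasP; exists cc => //; by rewrite mem_chs.
  - by move=> x y H; rewrite H // inE.
  - by rewrite disjoints1 i_notin.
  have EM : \big[Rplus/0]_(x | supp x (\bigcup_(cc <- chs i) Dset cc))
      \big[Rmult/1]_(cc <- chs i) \big[Rmult/1]_(j in Dset cc) phi cc b x j = \big[Rmult/1]_(j | ch i j) Q j b.
    rewrite sum_multi ?chs_uniq //.
    - rewrite big_chs; apply: eq_bigr => j hj; apply: IH => //; exact: tree_ch ti hj.
    - by move=> c1 c2 h1 h2 n; apply: (chs_disj ti h1 h2 n).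
    - move=> cc; rewrite mem_chs => hc; apply: phi_dep; exact: tree_ch ti hc.
  rewrite EM sum_single !ffunE !eqxx /=.
  by clear EM; case: b; case: (c i true); case: (c i false); rewrite /=; ring.
by rewrite !E2.
Qed.

Lemma probQ (A : ffT -> bool) : (forall x, A x = [forall j, tree k j ==> c j (x j)]) ->
  prob hd tl S f th k A = Q (S k) true.
Proof.
move=> HA; rewrite /prob -(HQ (dsc_refl (S k)) true) big_mkcond [RHS]big_mkcond.
apply: eq_bigr => x _; rewrite HA.
have EW : weight hd tl S f th k x =
    \big[Rmult/1]_(j | tree k j) tr j ((j == S k) || x (f k j)) (x j) *
    \big[Rmult/1]_(j | ~~ tree k j) (if x j then 0 else 1).
  rewrite /weight (bigID (fun j => tree k j)) /=; congr Rmult; apply: eq_bigr => j.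
    by move=> ->; rewrite /trans /tr.
  by move=> /negbTE ->.
have EP : forall j, j \in Dset (S k) ->
    phi (S k) true x j = if c j (x j) then tr j ((j == S k) || x (f k j)) (x j) else 0.
  by move=> j _; rewrite /phi; case: (j == S k).
rewrite EW; case: (boolP (supp x (Dset (S k)))) => hs; last first.
  have -> : \big[Rmult/1]_(j | ~~ tree k j) (if x j then 0 else 1) = 0.
    move: hs => /suppP; case: (boolP [forall j, (j \notin Dset (S k)) ==> ~~ x j]).
      by move=> /forallP H H'; case: H' => j; move: (H j) => /implyP h /h /negbTE.
    move=> /forallPn [j]; rewrite negb_imply negbK => /andP [hj xj] _.
    rewrite (bigD1 j) /=; last by rewrite inE in hj.
    by rewrite xj Rmult_0_l.
  by rewrite Rmult_0_r; case: ifP.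
have -> : \big[Rmult/1]_(j | ~~ tree k j) (if x j then 0 else 1) = 1.
  by move/suppP: hs => hs; apply: big1 => j hj; rewrite hs // inE.
rewrite Rmult_1_r (eq_bigr _ EP); case: ifP => hA.
  apply: eq_big => [j|j hj]; first by rewrite inE.
  by move/forallP: hA => /(_ j) /implyP /(_ hj) ->.
move/negbT: hA => /forallPn [j]; rewrite negb_imply => /andP [tj cj].
rewrite (bigD1 j) /=; last by rewrite inE.
by rewrite (negbTE cj) Rmult_0_l.
Qed.

End Qsec.

Lemma Q_ext th c1 c2 i : (forall l, l \in Dset i -> c1 l =1 c2 l) -> forall a, Q th c1 i a = Q th c2 i a.
Proof.
move: i; apply: dag_ind => i IH H a; rewrite !Q_fix /Qstep !H ?inE ?dsc_refl //.
have E : forall b, \big[Rmult/1]_(j | ch i j) Q th c1 j b = \big[Rmult/1]_(j | ch i j) Q th c2 j b.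
  move=> b; apply: eq_bigr => j hj; apply: IH => // l; rewrite inE => hl; apply: H.
  by rewrite inE; apply: dsc_trans (dsc_ch hj) hl.
by rewrite !E.
Qed.

Lemma big_noch (T : Type) (idx : T) (op : Monoid.com_law idx) i (F : 'I_m -> T) :
  leaf i -> \big[op/idx]_(j | ch i j) F j = idx.
Proof. by move/forallP=> H; rewrite big_pred0 // => j; apply/negbTE/H. Qed.

Lemma Q_noloss th c i : inTheta th -> (forall l, l \in Dset i -> forall b, c l b = (leaf l ==> ~~ b)) ->
  Q th c i true = Gam th i /\ Q th c i false = 1.
Proof.
move=> Hth; move: i; apply: dag_ind => i IH H.
rewrite !Q_fix /Qstep !H ?inE ?dsc_refl // (Gamma_fix th i).
case hl: (leaf i) => /=.
  by rewrite !big_noch // /tr; split; ring.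
have E : forall b, \big[Rmult/1]_(j | ch i j) Q th c j b =
    (if b then pC (Gam th) i else 1).
  move=> b; rewrite /prodC; case: b; [apply: eq_bigr | apply: big1] => j hj;
  (have [h1 h2] : Q th c j true = Gam th j /\ Q th c j false = 1 by
    apply: IH => // l; rewrite inE => hl'; apply: H; rewrite inE; exact: dsc_trans (dsc_ch hj) hl'); by [].
rewrite !E /tr; split; ring.
Qed.

Definition yv (o : 'I_m -> bool) l := [exists r, [&& leaf r, dsc l r & o r]].
Definition cobs (o : 'I_m -> bool) l b := leaf l ==> (b == o l).

Lemma yv_leaf o i : leaf i -> yv o i = o i.
Proof.
move=> hl; apply/existsP/idP => [[r /and3P [_ hr ho]]|ho].
  by rewrite -(leaf_dsc hl hr).
by exists i; rewrite hl dsc_refl ho.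
Qed.

Lemma yv_nonleaf o i : ~~ leaf i -> yv o i = [exists j, ch i j && yv o j].
Proof.
move=> hl; apply/existsP/existsP => [[r /and3P [lr hr ho]]|[j /andP [hj /existsP [r /and3P[lr hr ho]]]]].
  case: (dsc_split hr) => [E|[j hj hjr]]; first by rewrite -E lr in hl.
  by exists j; rewrite hj; apply/existsP; exists r; rewrite lr hjr ho.
by exists r; rewrite lr ho (dsc_trans (dsc_ch hj) hr).
Qed.

Lemma yv_dsc o i l : dsc i l -> yv o l -> yv o i.
Proof. by move=> hil /existsP [r /and3P[lr hr ho]]; apply/existsP; exists r; rewrite lr ho (dsc_trans hil hr). Qed.

Lemma Q_obs th o i : inTheta th ->
  Q th (cobs o) i false = (if yv o i then 0 else 1) /\
  Q th (cobs o) i true = (if yv o i then (1 - th i) * \big[Rmult/1]_(j | ch i j) Q th (cobs o) j true else Gam th i).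
Proof.
move=> Hth; move: i; apply: dag_ind => i IH.
rewrite !Q_fix /Qstep /cobs (Gamma_fix th i).
case hl: (leaf i) => /=.
  rewrite yv_leaf // !big_noch //; case: (o i) => /=; rewrite /tr; split; ring.
rewrite yv_nonleaf ?hl //; case: ifP => hy.
  case/existsP: hy => j0 /andP [hj0 hy0].
  have -> : \big[Rmult/1]_(j | ch i j) Q th (fun l b => leaf l ==> (b == o l)) j false = 0.
    rewrite (bigD1 j0) //=; case: (IH j0 hj0) => -> _; by rewrite hy0 Rmult_0_l.
  by rewrite /tr; split; ring.
have E : forall b, \big[Rmult/1]_(j | ch i j) Q th (fun l b => leaf l ==> (b == o l)) j b =
    (if b then pC (Gam th) i else 1).
  move=> b; rewrite /prodC; case: b; [apply: eq_bigr | apply: big1] => j hj; case: (IH j hj) => h1 h2;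
  (have hyj : yv o j = false by apply/negbTE; apply: contraFN hy => hy'; apply/existsP; exists j; rewrite hj hy');
  by rewrite /cobs hyj in h1 h2; rewrite ?h1 ?h2.
by rewrite !E /tr; split; ring.
Qed.

Lemma big_split_R (P : pred 'I_m) (F G : 'I_m -> R) :
  \big[Rplus/0]_(i | P i) (F i + G i) = \big[Rplus/0]_(i | P i) F i + \big[Rplus/0]_(i | P i) G i.
Proof. exact: big_split. Qed.

Lemma big_D_plus k i (F : 'I_m -> R) : tree k i ->
  \big[Rplus/0]_(l in Dset i) F l = F i + \big[Rplus/0]_(c | ch i c) \big[Rplus/0]_(l in Dset c) F l.
Proof. exact: big_D. Qed.

Lemma prod_pos (P : pred 'I_m) (F : 'I_m -> R) : (forall j, P j -> 0 < F j) -> 0 < \big[Rmult/1]_(j | P j) F j.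
Proof. move=> H; apply: big_ind => //; [lra | move=> a b ha hb; nra]. Qed.

Lemma Q_obs_ln th o k i : inTheta th -> tree k i ->
  0 < Q th (cobs o) i true /\
  ln (Q th (cobs o) i true) = ln (Gam th i) + \big[Rplus/0]_(l in Dset i) (if yv o l then Lambda hd tl (Gam th) l else 0).
Proof.
move=> Hth; move: i; apply: dag_ind => i IH ti.
have hb := Gamma_bounds Hth; have ht := Hth i.
case: (Q_obs o i Hth) => _ ->; case hy: (yv o i); last first.
  rewrite big1 ?Rplus_0_r; first by split; [case: (hb i) | by []].
  move=> l; rewrite inE => hl; case hyl: (yv o l) => //.
  by rewrite (yv_dsc hl hyl) in hy.
have IH' : forall j, ch i j -> 0 < Q th (cobs o) j true /\
   ln (Q th (cobs o) j true) = ln (Gam th j) + \big[Rplus/0]_(l in Dset j) (if yv o l then Lambda hd tl (Gam th) l else 0).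
  by move=> j hj; apply: IH => //; exact: tree_ch ti hj.
have hpos : 0 < \big[Rmult/1]_(j | ch i j) Q th (cobs o) j true by apply: prod_pos => j /IH' [].
split; first by apply: Rmult_lt_0_compat => //; lra.
rewrite ln_mult ?ln_prod; try lra; last by move=> j /IH' [].
rewrite (eq_bigr _ (fun j hj => proj2 (IH' j hj))) big_split_R.
rewrite (big_D_plus _ ti) hy Lambda_Gamma //.
lra.
Qed.

Lemma bigD1_R (P : pred 'I_m) (F : 'I_m -> R) j : P j ->
  \big[Rmult/1]_(l | P l) F l = F j * \big[Rmult/1]_(l | P l && (l != j)) F l.
Proof. exact: bigD1. Qed.

Lemma bigD1_plus (P : pred 'I_m) (F : 'I_m -> R) j : P j ->
  \big[Rplus/0]_(l | P l) F l = F j + \big[Rplus/0]_(l | P l && (l != j)) F l.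
Proof. exact: bigD1. Qed.

Lemma perk_alg k (a g : 'I_m -> R) (N : R) : (forall i, ~~ tree k i -> a i = 0) ->
  N * g (S k) + \big[Rplus/0]_(i : 'I_m) (a i * \big[Rplus/0]_(c | ch i c) g c)
     - \big[Rplus/0]_(i : 'I_m) (a i * g i)
  = \big[Rplus/0]_(i : 'I_m) ((if tree k i then (if i == S k then N - a i else a (f k i) - a i) else 0) * g i).
Proof.
move=> ha.
have E1 : \big[Rplus/0]_(i : 'I_m) (a i * \big[Rplus/0]_(c | ch i c) g c) =
    \big[Rplus/0]_(c : 'I_m) (if tree k c && (c != S k) then a (f k c) * g c else 0).
  rewrite (eq_bigr (fun i => \big[Rplus/0]_(c : 'I_m) (if ch i c then a i * g c else 0))); last first.
    by move=> i _; rewrite distrrG mkcondG.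
  rewrite exchG; apply: eq_bigr => c _.
  rewrite -(mkcondG (fun i => ch i c) (fun i => a i * g c)) -distrlG.
  case: ifP => h.
    case/andP: h => tc hS; case/andP: (Hf tc hS) => hfc tf.
    rewrite (@bigD1_plus (fun i => ch i c) _ (f k c) hfc) big1 ?Rplus_0_r // => i /andP [hic nif].
    apply: ha; apply/negP => ti; by rewrite (Hfu tc hS hic ti) eqxx in nif.
  rewrite big1 ?Rmult_0_l // => i hic; apply: ha; apply/negP => ti.
  have tc := tree_ch ti hic.
  have hS : c != S k by apply/eqP => E; have := HS k i; rewrite -E hic.
  by rewrite tc hS in h.
have E2 : forall i, (if tree k i then (if i == S k then N - a i else a (f k i) - a i) else 0) * g i =
    (if i == S k then N * g i else 0) + (if tree k i && (i != S k) then a (f k i) * g i else 0) + - (a i * g i).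
  move=> i; case ti: (tree k i) => /=.
    by case: (eqVneq i (S k)) => _ /=; ring.
  have -> : (i == S k) = false by apply/negbTE/eqP => E; rewrite E /inTree dsc_refl in ti.
  by rewrite ha ?ti //; ring.
rewrite (eq_bigr _ (fun i _ => E2 i)) !splitG oppG E1.
rewrite -(mkcondG (fun i => i == S k) (fun i => N * g i)) big_pred1_eq.
rewrite /Rminus; congr (_ + _).
Qed.

Lemma ln_ratio th i : inTheta th ->
  ln ((1 - Gam th i) / (1 - prod0 hd tl (Gam th) i)) = ln (1 - th i).
Proof.
move=> Hth; congr ln; rewrite /prod0 (Gamma_fix th i); case hl: (leaf i).
  by field.
have := pC_lt1 Hth (negbT hl); move=> h; field; lra.
Qed.

Lemma probe_eq th k (o : 'I_m -> bool) :
  prob hd tl S f th k (fun x => [forall r, (leaf r && tree k r) ==> (x r == o r)]) = Q th (cobs o) (S k) true.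
Proof.
apply: probQ => x; apply: eq_forallb => j; rewrite /cobs.
by case: (leaf j); case: (tree k j).
Qed.

Lemma part2a th n obs : inTheta th ->
  loglik hd tl S f th n obs =
    \big[Rplus/0]_(k : 'I_K) (INR (n k) * ln (Gam th (S k)))
    + \big[Rplus/0]_(i : 'I_m) (n1 hd tl S n obs i * Lambda hd tl (Gam th) i).
Proof.
move=> Hth.
have tS : forall k, tree k (S k) by move=> k; exact: dsc_refl.
have pos : forall k (t : 'I_(n k)),
    0 < prob hd tl S f th k (fun x => [forall r, (leaf r && tree k r) ==> (x r == obs k t r)]).
  by move=> k t; rewrite probe_eq; case: (Q_obs_ln (obs k t) Hth (tS k)).
rewrite /loglik ln_prodG; last by move=> k _; apply: prod_posG => t _; apply: pos.
rewrite (eq_bigr (fun k => INR (n k) * ln (Gam th (S k)) +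
    \big[Rplus/0]_(l : 'I_m) (n1k hd tl S n obs k l * Lambda hd tl (Gam th) l))); last first.
  move=> k _; rewrite ln_prodG; last by move=> t _; apply: pos.
  rewrite (eq_bigr (fun t : 'I_(n k) => ln (Gam th (S k)) + \big[Rplus/0]_(l : 'I_m)
      (if tree k l then (if yv (obs k t) l then Lambda hd tl (Gam th) l else 0) else 0))); last first.
    move=> t _; rewrite probe_eq; case: (Q_obs_ln (obs k t) Hth (tS k)) => _ ->.
    by congr (_ + _); rewrite mkcondG; apply: eq_bigr => l _; rewrite inE.
  rewrite splitG sum_const_R card_ord; congr (_ + _).
  rewrite exchG; apply: eq_bigr => l _; rewrite /n1k.
  case: (tree k l); last by rewrite big1 ?Rmult_0_l.
  by rewrite sum_count.
rewrite splitG; congr (_ + _).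
rewrite exchG; apply: eq_bigr => l _; by rewrite /n1 distrlG.
Qed.

Lemma shuffle4 (A B C D C' D' : R) : C = C' -> D = D' ->
  A + (B + (C + - D)) = B + (A + C' + - D').
Proof. by move=> -> ->; ring. Qed.

Lemma part2b th n obs : inTheta th ->
  \big[Rplus/0]_(k : 'I_K) (INR (n k) * ln (Gam th (S k)))
    + \big[Rplus/0]_(i : 'I_m) (n1 hd tl S n obs i * Lambda hd tl (Gam th) i) =
  \big[Rplus/0]_(i : 'I_m)
     (n1 hd tl S n obs i * ln ((1 - Gam th i) / (1 - prod0 hd tl (Gam th) i))
      + n0 hd tl S f n obs i * ln (Gam th i)).
Proof.
move=> Hth.
have E1 : forall i, n1 hd tl S n obs i * Lambda hd tl (Gam th) i =
   n1 hd tl S n obs i * ln (1 - th i) + (n1 hd tl S n obs i * \big[Rplus/0]_(c | ch i c) ln (Gam th c) + - (n1 hd tl S n obs i * ln (Gam th i))).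
  by move=> i; rewrite Lambda_Gamma //; ring.
have E2 : forall i, n1 hd tl S n obs i * ln ((1 - Gam th i) / (1 - prod0 hd tl (Gam th) i))
      + n0 hd tl S f n obs i * ln (Gam th i) =
    n1 hd tl S n obs i * ln (1 - th i) + n0 hd tl S f n obs i * ln (Gam th i).
  by move=> i; rewrite ln_ratio.
rewrite (eq_bigr _ (fun i _ => E1 i)) (eq_bigr _ (fun i _ => E2 i)) !splitG oppG.
suff : \big[Rplus/0]_(i : 'I_m) (n0 hd tl S f n obs i * ln (Gam th i)) =
   \big[Rplus/0]_(k : 'I_K) (INR (n k) * ln (Gam th (S k)))
   + \big[Rplus/0]_(i : 'I_m) (n1 hd tl S n obs i * \big[Rplus/0]_(c | ch i c) ln (Gam th c))
   - \big[Rplus/0]_(i : 'I_m) (n1 hd tl S n obs i * ln (Gam th i)).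
  move=> HH; rewrite HH /Rminus.
  by apply: shuffle4.
rewrite /n0 (eq_bigr (fun i => \big[Rplus/0]_(k : 'I_K) (n0k hd tl S f n obs k i * ln (Gam th i)))); last first.
  by move=> i _; rewrite distrlG.
rewrite exchG.
rewrite (eq_bigr (fun k => INR (n k) * ln (Gam th (S k))
   + \big[Rplus/0]_(i : 'I_m) (n1k hd tl S n obs k i * \big[Rplus/0]_(c | ch i c) ln (Gam th c))
   + - \big[Rplus/0]_(i : 'I_m) (n1k hd tl S n obs k i * ln (Gam th i)))); last first.
  move=> k _; rewrite -perk_alg; first by rewrite /Rminus.
  by move=> i /negbTE hi; rewrite /n1k hi.
rewrite !splitG oppG /n1.
rewrite (eq_bigr (fun i => \big[Rplus/0]_(k : 'I_K) (n1k hd tl S n obs k i * \big[Rplus/0]_(c | ch i c) ln (Gam th c)))); last first.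
  by move=> i _; rewrite distrlG.
rewrite /Rminus; congr (_ + _ + - _).
  exact: exchG.
rewrite exchG; apply: eq_bigr => i _; by rewrite distrlG.
Qed.

Section P3.
Variables (k : 'I_K) (th : 'I_m -> R) (i : 'I_m).
Hypotheses (Hth : inTheta th) (ti : tree k i) (hnl : ~~ leaf i).

Definition cD j b := ((leaf j && dsc i j) ==> ~~ b) && (((i != S k) && (j == f k i)) ==> b).
Definition cN j b := cD j b && ((j == i) ==> b).
Definition QNi := (1 - th i) * pC (Gam th) i.

Lemma fki_notin : i != S k -> dsc i (f k i) = false.
Proof. by move=> hS; case/andP: (Hf ti hS) => h _; apply/negbTE/Hacyc. Qed.

Lemma QD_i : Q th cD i true = Gam th i.
Proof.
case: (@Q_noloss th cD i Hth) => // l; rewrite inE => hl b; rewrite /cD hl andbT.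
case: (boolP (i != S k)) => hS //=; last by rewrite andbT.
have -> : (l == f k i) = false by apply/negbTE/eqP => E; move: hl; rewrite E (fki_notin hS).
by rewrite andbT.
Qed.

Lemma cN_noloss j : ch i j -> forall l, l \in Dset j -> forall b, cN l b = (leaf l ==> ~~ b).
Proof.
move=> hj l; rewrite inE => hl b.
have hil : dsc i l := dsc_trans (dsc_ch hj) hl.
rewrite /cN /cD hil andbT.
have -> : (l == i) = false by apply/negbTE/eqP => E; have := Hacyc hj; rewrite -E hl.
rewrite /= andbT.
case: (boolP (i != S k)) => hS //=; last by rewrite andbT.
have -> : (l == f k i) = false by apply/negbTE/eqP => E; move: hil; rewrite E (fki_notin hS).
by rewrite andbT.
Qed.

Lemma QN_i : Q th cN i true = QNi.
Proof.
rewrite Q_fix /Qstep /QNi.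
have -> : cN i true = true by rewrite /cN /cD (negbTE hnl) /= !implybT.
have -> : cN i false = false by rewrite /cN eqxx andbF.
rewrite /tr Rplus_0_r; congr Rmult; rewrite /prodC; apply: eq_bigr => j hj.
by case: (@Q_noloss th cN j Hth (cN_noloss hj)).
Qed.

Lemma alg3 (t x y r g q : R) : x * g = y * q -> t * (x * r) * g = t * (y * r) * q.
Proof. move=> H; transitivity (t * r * (x * g)); first ring. rewrite H; ring. Qed.

Lemma ratio j : tree k j -> dsc j i -> j != i -> forall a,
  Q th cN j a * Gam th i = Q th cD j a * QNi.
Proof.
move: j; apply: dag_ind => j IH tj dji nji a.
case: (dsc_split dji) => [E|[l0 hl0 dl0]]; first by rewrite E eqxx in nji.
have tl0 := tree_ch tj hl0.
have cNj : forall b, cN j b = cD j b by move=> b; rewrite /cN (negbTE nji) andbT.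
have rest : forall b, \big[Rmult/1]_(l | ch j l && (l != l0)) Q th cN l b =
    \big[Rmult/1]_(l | ch j l && (l != l0)) Q th cD l b.
  move=> b; apply: eq_bigr => l /andP [hl nl]; apply: Q_ext => l' hl' b'.
  rewrite /cN; case: (eqVneq l' i) => [E|] /=; last by rewrite andbT.
  rewrite E inE in hl'; by rewrite (ch_disj tj hl hl0 hl' dl0) eqxx in nl.
have key : forall b, cD j b -> Q th cN l0 b * Gam th i = Q th cD l0 b * QNi.
  case: (eqVneq l0 i) => [E|n] b hb; last exact: IH.
  rewrite E in hl0 *.
  have hS : i != S k by apply/eqP => E'; have := HS k j; rewrite -E' hl0.
  have Ej := Hfu ti hS hl0 tj.
  case: b hb => hb; last by move: hb; rewrite /cD hS Ej eqxx /= andbF.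
  by rewrite QN_i QD_i; ring.
have eb : forall b, (if cD j b then tr th j a b * (Q th cN l0 b * \big[Rmult/1]_(l | ch j l && (l != l0)) Q th cN l b) else 0) * Gam th i =
    (if cD j b then tr th j a b * (Q th cD l0 b * \big[Rmult/1]_(l | ch j l && (l != l0)) Q th cD l b) else 0) * QNi.
  move=> b; case: ifP => hb; last ring.
  by rewrite rest; apply: alg3; apply: key.
rewrite !Q_fix /Qstep !cNj !(bigD1_R _ hl0) !Rmult_plus_distr_r.
by rewrite (eb true) (eb false).
Qed.

Definition nolossR (x : ffT) := [forall r, (leaf r && dsc i r) ==> ~~ x r].
Definition attail (x : ffT) := (i == S k) || x (f k i).

Lemma evD (x : ffT) : (nolossR x && attail x) = [forall j, tree k j ==> cD j (x j)].
Proof.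
apply/idP/idP.
  case/andP => /forallP hn ha; apply/forallP => j; apply/implyP => tj; rewrite /cD; apply/andP; split.
    by apply/implyP => hjl; exact: (implyP (hn j) hjl).
  by apply/implyP => /andP [hS /eqP ->]; move: ha; rewrite /attail (negbTE hS).
move/forallP => H; apply/andP; split.
  apply/forallP => r; apply/implyP => /andP [lr dr]; have := H r.
  by rewrite (tree_dsc ti dr) /= /cD lr dr /= => /andP [h _].
rewrite /attail; case: (boolP (i == S k)) => //= hS.
have tf : tree k (f k i) by case/andP: (Hf ti hS).
by have := H (f k i); rewrite tf /= /cD hS eqxx /= => /andP [_ h].
Qed.

Lemma evN (x : ffT) : [&& x i, nolossR x & attail x] = [forall j, tree k j ==> cN j (x j)].
Proof.
apply/idP/idP.
  case/and3P => xi hn ha; have := evD x; rewrite hn ha /= => /esym /forallP H.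
  apply/forallP => j; apply/implyP => tj; rewrite /cN (implyP (H j) tj) /=.
  by apply/implyP => /eqP ->.
move=> /forallP H.
have HD : [forall j, tree k j ==> cD j (x j)].
  by apply/forallP => j; apply/implyP => tj; have := implyP (H j) tj; case/andP.
rewrite -evD in HD; case/andP: HD => -> ->; rewrite andbT.
by have := implyP (H i) ti; rewrite /cN eqxx /= => /andP [_ ->].
Qed.

Lemma weight_ge0 (x : ffT) : 0 <= weight hd tl S f th k x.
Proof.
apply: big_ind => //; [lra | move=> a b ha hb; nra |].
move=> j _; have := Hth j; case: (tree k j); rewrite /trans;
  case: ((j == S k) || x (f k j)); case: (x j); lra.
Qed.

Lemma prob_ge (A : ffT -> bool) x : A x -> weight hd tl S f th k x <= prob hd tl S f th k A.
Proof.
move=> hA; rewrite /prob (bigD1 x) //=.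
have : 0 <= \big[Rplus/0]_(y | A y && (y != x)) weight hd tl S f th k y.
  by apply: big_ind => //; [lra | move=> a b ha hb; lra | move=> y _; apply: weight_ge0].
move=> h; change (weight hd tl S f th k x <= weight hd tl S f th k x +
  \big[Rplus/0]_(y | A y && (y != x)) weight hd tl S f th k y); lra.
Qed.

Definition x0 : ffT := [ffun l => [&& i != S k, dsc l (f k i) & tree k l]].

Lemma hx0 l : x0 l = [&& i != S k, dsc l (f k i) & tree k l].
Proof. by rewrite /x0 ffunE. Qed.

Lemma den_pos : 0 < prob hd tl S f th k (fun x => nolossR x && attail x).
Proof.
apply: Rlt_le_trans (prob_ge (x := x0) _).
  apply: big_ind => //; [lra | move=> a b ha hb; nra |].
  move=> j _; have := Hth j; rewrite /trans.
  case tj: (tree k j) => /=; last by rewrite hx0 tj !andbF; lra.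
  case hj: (x0 j); last by case: (_ || _); lra.
  suff -> : (j == S k) || x0 (f k j) by lra.
  move: hj; rewrite hx0 => /and3P [hS dj _].
  case: (eqVneq j (S k)) => //= hjS.
  case/andP: (Hf tj hjS) => hc tf.
  by rewrite hx0 hS tf (dsc_trans (dsc_ch hc) dj).
rewrite /nolossR /attail; apply/andP; split.
  apply/forallP => r; apply/implyP => /andP [_ dr]; rewrite hx0.
  apply/negP => /and3P [hS drf _].
  by have := dsc_trans dr drf; rewrite (fki_notin hS).
case: (boolP (i == S k)) => //= hS; rewrite hx0 hS dsc_refl /=.
by case/andP: (Hf ti hS).
Qed.

Lemma part3_main : Lambda hd tl (Gam th) i =
  ln (prob hd tl S f th k (fun x => [&& x i, nolossR x & attail x]) /
      prob hd tl S f th k (fun x => nolossR x && attail x)).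
Proof.
have hden := den_pos.
rewrite (@probQ k th cN _ evN) in hden *.
rewrite (@probQ k th cD _ evD) in hden *.
have hG := Gamma_bounds Hth i.
have rel : Q th cN (S k) true * Gam th i = Q th cD (S k) true * QNi.
  case: (eqVneq i (S k)) => [E|n].
    by rewrite -E QN_i QD_i; ring.
  apply: ratio => //; first exact: dsc_refl.
  by apply/eqP => E; rewrite E eqxx in n.
rewrite /Lambda (negbTE hnl) thetaOf_Gamma //.
have -> : Gam th i - th i = QNi by rewrite /QNi (Gamma_fix th i) (negbTE hnl); ring.
congr ln; rewrite /Rdiv.
apply: (Rmult_eq_reg_r (Q th cD (S k) true * Gam th i)); last by apply: Rgt_not_eq; nra.
transitivity (QNi * Q th cD (S k) true); first (field; lra).
transitivity (Q th cN (S k) true * Gam th i); first by rewrite rel; ring.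
field; lra.
Qed.

End P3.
End Graph.

Unset Implicit Arguments.

Theorem mainTheorem3 (V : eqType) (m K : nat) (hd tl : 'I_m -> V)
  (S : 'I_K -> 'I_m) (f : 'I_K -> 'I_m -> 'I_m) :
  (leq 1 K) ->
  (* directed acyclic graph *)
  (forall i j, child hd tl i j -> ~~ desc hd tl j i) ->
  (* F_{S_k} is empty: the tail of S_k is a source node *)
  (forall k j, ~~ child hd tl j (S k)) ->
  (* f k i is a parent of i lying in E_k, and it is the only one *)
  (forall k i, inTree hd tl S k i -> i != S k ->
     child hd tl (f k i) i && inTree hd tl S k (f k i)) ->
  (forall k i j, inTree hd tl S k i -> i != S k ->
     child hd tl j i -> inTree hd tl S k j -> j = f k i) ->
  (* every link belongs to some tree *)
  (forall i, exists k, inTree hd tl S k i) ->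
  (* each root link belongs only to its own tree *)
  (forall k k', inTree hd tl S k' (S k) -> k = k') ->
  (* (1) Lambda is injective on Xi, hence a bijection Xi -> Psi := Lambda(Xi) *)
  (forall xi1 xi2, inXi hd tl xi1 -> inXi hd tl xi2 ->
     (forall i, Lambda hd tl xi1 i = Lambda hd tl xi2 i) ->
     forall i, xi1 i = xi2 i)
  /\
  (* (2) the two expressions of the log-likelihood *)
  (forall theta, inTheta theta ->
   forall (n : 'I_K -> nat) (obs : 'I_K -> nat -> 'I_m -> bool),
     loglik hd tl S f theta n obs =
       \big[Rplus/0]_(k : 'I_K) (INR (n k) * ln (Gamma hd tl theta (S k)))
       + \big[Rplus/0]_(i : 'I_m)
           (n1 hd tl S n obs i * Lambda hd tl (Gamma hd tl theta) i)
     /\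
     loglik hd tl S f theta n obs =
       \big[Rplus/0]_(i : 'I_m)
         (n1 hd tl S n obs i *
            ln ((1 - Gamma hd tl theta i) / (1 - prod0 hd tl (Gamma hd tl theta) i))
          + n0 hd tl S f n obs i * ln (Gamma hd tl theta i)))
  /\
  (* (3) conditional-probability meaning of psi_i for non-leaf i *)
  (forall theta, inTheta theta ->
   forall (i : 'I_m) (k : 'I_K), ~~ isleaf hd tl i -> inTree hd tl S k i ->
     let attail x := (i == S k) || x (f k i) in
     let nolossR x := [forall r, (isleaf hd tl r && desc hd tl i r) ==> ~~ x r] in
     Lambda hd tl (Gamma hd tl theta) i =
       ln (prob hd tl S f theta k (fun x => [&& x i, nolossR x & attail x])
           / prob hd tl S f theta k (fun x => nolossR x && attail x))).
Proof.
move=> _ Hacyc HS Hf Hfu _ _.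
split.
  move=> xi1 xi2 [th1 [H1 E1]] [th2 [H2 E2]] HL i.
  have e1 : xi1 = Gamma hd tl th1 by apply: functional_extensionality.
  have e2 : xi2 = Gamma hd tl th2 by apply: functional_extensionality.
  subst xi1 xi2; exact: (part1 Hacyc H1 H2 HL).
split.
  move=> th Hth n obs; split; first exact: (part2a Hacyc HS Hf Hfu n obs Hth).
  by rewrite (part2a Hacyc HS Hf Hfu n obs Hth); apply: (part2b Hacyc HS Hf Hfu n obs Hth).
move=> th Hth i k hnl ti /=.
exact: (part3_main Hacyc HS Hf Hfu Hth ti hnl).
Qed.
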